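(* Let $c_{\min}\le c_{\max}$ and $d_{\min}\le d_{\max}$ be integers, $T=\{c_{\min},\dots,c_{\max}\}\times\{d_{\min},\dots,d_{\max}\}$, let $f:T\to[0,1]$ be a probability mass function, and let $a:T\to[0,1]$ be monotonic, i.e. $a_{c,d}\ge a_{c',d'}$ whenever $c\le c'$ and $d\ge d'$. Consider the problem of choosing $p:T\to\mathbb{R}$ to $$\text{minimize}\ \sum_{(c,d)\in T} f_{c,d}\,p_{c,d}$$ subject to, for every $(c,d)\in T$: $p_{c,d}-c\,a_{c,d}\ge p_{c+1,d}-c\,a_{c+1,d}$ (if $c<c_{\max}$); $p_{c,d}-c\,a_{c,d}\ge p_{c-1,d}-c\,a_{c-1,d}$ (if $c>c_{\min}$); $p_{c,d}-c\,a_{c,d}\ge p_{c,d-1}-c\,a_{c,d-1}$ (if $d>d_{\min}$); $p_{c,d}-c\,a_{c,d}\ge 0$. Then the payment rule $$p_{c,d}=c\,a_{c,d}+\sum_{k=c+1}^{c_{\max}} a_{k,d}\qquad((c,d)\in T)$$ is an optimal solution of this problem.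
   Context: Types $(c,d)$ consist of a forwarding cost $c$ and a predicted path duration $d$; $f_{c,d}$ is the probability that a bidder has type $(c,d)$, $a_{c,d}$ is the interim probability that a bidder reporting $(c,d)$ wins, and $p_{c,d}$ is its expected payment. The first three families of constraints are the adjacent incentive-compatibility constraints and the last is individual rationality; the objective is the auctioneer's expected payment. *)

(* Defs.v *)
From HB Require Import structures.
From mathcomp Require Import all_boot all_order all_algebra.
Set Implicit Arguments. Unset Strict Implicit. Unset Printing Implicit Defensive.
Import Order.TTheory GRing.Theory Num.Theory.
Local Open Scope ring_scope.

Definition zrange (m n : int) : seq int :=
  if m <= n then [seq m + (i%:Z) | i <- iota 0 (absz (n - m)).+1] else [::].

Section Auction.
Variables (R : realFieldType) (cmin cmax dmin dmax : int).

Definition inT (c d : int) : bool := (cmin <= c <= cmax) && (dmin <= d <= dmax).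

Definition sumT (g : int -> int -> R) : R :=
  \sum_(c <- zrange cmin cmax) \sum_(d <- zrange dmin dmax) g c d.

Definition is_pmf (f : int -> int -> R) : Prop :=
  (forall c d, inT c d -> 0 <= f c d <= 1) /\ sumT f = 1.

Definition alloc_ok (a : int -> int -> R) : Prop :=
  (forall c d, inT c d -> 0 <= a c d <= 1) /\
  (forall c d c' d', inT c d -> inT c' d' -> c <= c' -> d' <= d ->
     a c' d' <= a c d).

Definition feasible (a p : int -> int -> R) : Prop :=
  forall c d, inT c d ->
    (c < cmax -> p c d - c%:~R * a c d >= p (c + 1) d - c%:~R * a (c + 1) d) /\
    (cmin < c -> p c d - c%:~R * a c d >= p (c - 1) d - c%:~R * a (c - 1) d) /\
    (dmin < d -> p c d - c%:~R * a c d >= p c (d - 1) - c%:~R * a c (d - 1)) /\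
    (p c d - c%:~R * a c d >= 0).

Definition objective (f p : int -> int -> R) : R := sumT (fun c d => f c d * p c d).

Definition pay_rule (a : int -> int -> R) (c d : int) : R :=
  c%:~R * a c d + \sum_(k <- zrange (c + 1) cmax) a k d.

End Auction.

(* Main.v *)
Require Import Defs.
From HB Require Import structures.
From mathcomp Require Import all_boot all_order all_algebra.
From mathcomp Require Import lra zify.
Import Order.TTheory GRing.Theory Num.Theory.
Local Open Scope ring_scope.

Lemma zrange_nil (m n : int) : n < m -> zrange m n = [::].
Proof. by move=> h; rewrite /zrange; case: ifP => // h2; lia. Qed.

Lemma zrangeS (m n : int) : m <= n -> zrange m n = m :: zrange (m + 1) n.
Proof.
move=> h; rewrite /zrange h.
have [h1|h1] := lerP (m + 1) n.
  have -> : absz (n - m)%R = (absz (n - (m + 1))%R).+1 by lia.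
  rewrite [iota 0 _]/= /= addr0; congr cons.
  set K := absz _.
  rewrite addr0; congr cons.
  have -> : iota 2 K = map (addn 2) (iota 0 K) by rewrite -iotaDl.
  rewrite -map_comp.
  have -> : iota 1 K = map (addn 1) (iota 0 K) by rewrite -iotaDl.
  rewrite -map_comp; apply: eq_map => i /=. lia.
have -> : n = m by lia.
by rewrite subrr /= addr0.
Qed.

Lemma mem_zrange (m n x : int) : x \in zrange m n -> m <= x <= n.
Proof.
rewrite /zrange; case: ifP => // h /mapP [i] /[!mem_iota] /andP [_ hi] ->.
apply/andP; split; lia.
Qed.

Section S.
Variables (R : realFieldType) (cmin cmax dmin dmax : int) (a : int -> int -> R).

Lemma sum_step (c : int) (d : int) : c < cmax ->
  \sum_(k <- zrange (c + 1) cmax) a k d =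
  a (c + 1) d + \sum_(k <- zrange (c + 1 + 1) cmax) a k d.
Proof. by move=> h; rewrite zrangeS ?big_cons //; lia. Qed.

End S.

Theorem theorem2 (R : realFieldType) (cmin cmax dmin dmax : int)
  (f a : int -> int -> R) :
  cmin <= cmax -> dmin <= dmax ->
  is_pmf cmin cmax dmin dmax f ->
  alloc_ok cmin cmax dmin dmax a ->
  feasible cmin cmax dmin dmax a (pay_rule cmax a) /\
  (forall p : int -> int -> R, feasible cmin cmax dmin dmax a p ->
     objective cmin cmax dmin dmax f (pay_rule cmax a)
       <= objective cmin cmax dmin dmax f p).
Proof.
move=> hc hd [hf _] [ha hmon].
have Sge0 : forall c d, inT cmin cmax dmin dmax c d ->
    0 <= \sum_(k <- zrange (c + 1) cmax) a k d.
  move=> c d /andP [/andP [h1 h2] /andP [h3 h4]].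
  rewrite big_seq; apply: sumr_ge0 => k /mem_zrange hk.
  have /andP [] // : 0 <= a k d <= 1 by apply: ha; rewrite /inT h3 h4 /=; lia.
split.
  move=> c d hT; rewrite /pay_rule.
  move: (hT) => /andP [/andP [h1 h2] /andP [h3 h4]].
  split; [|split; [|split]].
  - move=> hlt; rewrite (@sum_step _ cmax a c d hlt) rmorphD /=. lra.
  - move=> hlt.
    have e : c - 1 + 1 = c by rewrite subrK.
    have hlt' : c - 1 < cmax by lia.
    rewrite (@sum_step _ cmax a (c - 1) d hlt') e.
    have : a c d <= a (c - 1) d.
      apply: hmon => //; rewrite ?lexx //.
        rewrite /inT h3 h4 andbT; apply/andP; split; lia.
      lia.
    rewrite rmorphB /=. lra.
  - move=> hlt.
    have : \sum_(k <- zrange (c + 1) cmax) a k (d - 1) <=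
           \sum_(k <- zrange (c + 1) cmax) a k d.
      rewrite !big_seq; apply: ler_sum => k /mem_zrange hk.
      apply: hmon; rewrite ?lexx /inT ?h3 ?h4 //=; try (apply/andP; split); lia.
    lra.
  - have := Sge0 c d hT. lra.
move=> p hp.
have key : forall (k : nat) c d, cmax - c = k%:Z -> inT cmin cmax dmin dmax c d ->
    pay_rule cmax a c d <= p c d.
  elim=> [|k IH] c d hk hT; rewrite /pay_rule.
    have -> : c = cmax by lia.
    rewrite zrange_nil ?big_nil ?addr0; last lia.
    have [_ [_ [_ ]]] := hp _ _ hT. have -> : c = cmax by lia. lra.
  have hlt : c < cmax by lia.
  have [h1 _] := hp _ _ hT.
  move: (h1 hlt) => {}h1.
  move: (hT) => /andP [/andP [g1 g2] /andP [g3 g4]].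
  have hT' : inT cmin cmax dmin dmax (c + 1) d.
    by rewrite /inT g3 g4 andbT; apply/andP; split; lia.
  have := IH (c + 1) d ltac:(lia) hT'.
  rewrite /pay_rule (@sum_step _ cmax a c d hlt) rmorphD /=. lra.
rewrite /objective /sumT big_seq [X in _ <= X]big_seq; apply: ler_sum => c /mem_zrange hc'.
rewrite big_seq [X in _ <= X]big_seq; apply: ler_sum => d /mem_zrange hd'.
have hT : inT cmin cmax dmin dmax c d by rewrite /inT hc' hd'.
have /andP [f0 _] := hf _ _ hT.
apply: ler_wpM2l => //; apply: (key (absz (cmax - c))) => //.
move: hc' => /andP [_ ?]; lia.
Qed.
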